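(* Let $n\in\mathbb N$ and let $f$ be extremal for $M_n$ with $f(0)>0$ and $N$ atoms. Let $t=-\log f(0)>0$ and let $h:\mathbb D\to\mathbb D$ be the holomorphic function with $h(0)=0$ such that $f=\exp\big(t\frac{h-1}{h+1}\big)$. Then $h$ is a finite Blaschke product of degree $N$.
   Context: $\mathbb D$ is the open unit disc; $\mathcal B_0=\{f$ holomorphic on $\mathbb D: 0<|f|\le1\}$; $M_n(f)=\mathrm{Re}\,a_n$ for $f=\sum a_jz^j$; $f\in\mathcal B_0$ is extremal for $M_n$ if $M_n(f)\ge M_n(F)$ for all $F\in\mathcal B_0$. It is known that such $f$ with $f(0)>0$ has the form $f(z)=\exp\big(-\sum_{j=1}^N\lambda_j\frac{1+\alpha_jz}{1-\alpha_jz}\big)$ with $1\le N\le n$, $\lambda_j>0$, distinct $\alpha_j\in\partial\mathbb D$ ($N$ = number of atoms). Explicitly $h=\frac{t+\log f}{t-\log f}$ with $\log f$ the branch real at $0$. *)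

(* Defs.v *)
From Stdlib Require Import Reals.
From Coquelicot Require Import Coquelicot.
Open Scope C_scope.

Definition Cexp (z : Complex.C) : Complex.C :=
  (exp (Re z) * cos (Im z), exp (Re z) * sin (Im z))%R.

Definition in_disc (z : Complex.C) : Prop := (Cmod z < 1)%R.

Definition holo_on_disc (f : Complex.C -> Complex.C) : Prop :=
  forall z, in_disc z -> ex_derive f z.

Definition B0 (f : Complex.C -> Complex.C) : Prop :=
  holo_on_disc f /\ forall z, in_disc z -> (0 < Cmod (f z) <= 1)%R.

Definition taylor_coefs (f : Complex.C -> Complex.C) (a : nat -> Complex.C) : Prop :=
  forall z, in_disc z -> is_series (fun j => a j * pow_n z j) (f z).

(* f is extremal for M_n(f) = Re a_n *)
Definition extremal (n : nat) (f : Complex.C -> Complex.C) : Prop :=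
  B0 f /\ forall (F : Complex.C -> Complex.C) (a b : nat -> Complex.C),
    B0 F -> taylor_coefs f a -> taylor_coefs F b -> (Re (b n) <= Re (a n))%R.

Fixpoint csum (u : nat -> Complex.C) (N : nat) : Complex.C :=
  match N with O => 0 | S k => csum u k + u k end.
Fixpoint cprod (u : nat -> Complex.C) (N : nat) : Complex.C :=
  match N with O => 1 | S k => cprod u k * u k end.

Definition has_atoms (f : Complex.C -> Complex.C) (N : nat) : Prop :=
  exists (lam : nat -> R) (al : nat -> Complex.C),
    (forall j, (j < N)%nat -> (0 < lam j)%R) /\
    (forall j, (j < N)%nat -> Cmod (al j) = 1%R) /\
    (forall i j, (i < N)%nat -> (j < N)%nat -> al i = al j -> i = j) /\
    (forall z, in_disc z ->
       f z = Cexp (- csum (fun j => RtoC (lam j) * ((1 + al j * z) / (1 - al j * z))) N)).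

Definition blaschke_deg (h : Complex.C -> Complex.C) (N : nat) : Prop :=
  exists (c : Complex.C) (a : nat -> Complex.C),
    Cmod c = 1%R /\ (forall k, (k < N)%nat -> (Cmod (a k) < 1)%R) /\
    (forall z, in_disc z ->
       h z = c * cprod (fun k => (z - a k) / (1 - Cconj (a k) * z)) N).

(* Main.v *)
Require Import Defs.
From Stdlib Require Import Reals.
From Coquelicot Require Import Coquelicot.
Open Scope C_scope.
From Stdlib Require Import Lra Lia Classical.

Fixpoint Dc (al : nat -> C) (k : nat) (z : C) : C :=
  match k with O => 1 | S k => Dc al k z * (1 - al k * z) end.
Fixpoint Nc (al : nat -> C) (lam : nat -> R) (k : nat) (z : C) : C :=
  match k with O => 0 | S k => Nc al lam k z * (1 - al k * z) + RtoC (lam k) * (1 + al k * z) * Dc al k z end.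

Module Bridge.
From mathcomp Require Import all_boot all_order all_algebra.
From mathcomp Require Import Rstruct complex.
Import GRing.Theory Num.Theory.
Local Open Scope ring_scope.

Definition phi (z : Coquelicot.Complex.C) : R[i] := Complex z.1 z.2.
Definition psi (w : R[i]) : Coquelicot.Complex.C := (complex.Re w, complex.Im w).
Lemma phipsi w : phi (psi w) = w. Proof. by case: w. Qed.
Lemma phiD x y : phi (Cplus x y) = phi x + phi y. Proof. by case: x; case: y. Qed.
Lemma phiM x y : phi (Cmult x y) = phi x * phi y. Proof. by case: x; case: y. Qed.
Lemma phiN x : phi (Copp x) = - phi x. Proof. by case: x. Qed.
Lemma phiB x y : phi (Cminus x y) = phi x - phi y. Proof. by case: x; case: y. Qed.
Lemma phiR r : phi (RtoC r) = Complex r 0. Proof. by []. Qed.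
Lemma phi1 : phi (RtoC 1) = 1. Proof. by []. Qed.
Lemma phi0 : phi (RtoC 0) = 0. Proof. by []. Qed.
Lemma phi_inj x y : phi x = phi y -> x = y.
Proof. by case: x => a b; case: y => c d [-> ->]. Qed.
Section Poly.
Variables (al : nat -> Coquelicot.Complex.C) (lam : nat -> R).
Definition lin (a b : R[i]) : {poly R[i]} := a%:P + b%:P * 'X.
Fixpoint Dm k : {poly R[i]} :=
  match k with O => 1 | S k => Dm k * lin 1 (- phi (al k)) end.
Fixpoint Nm k : {poly R[i]} :=
  match k with O => 0 | S k => Nm k * lin 1 (- phi (al k))
     + (Complex (lam k) 0)%:P * lin 1 (phi (al k)) * Dm k end.

Lemma horner_lin a b x : (lin a b).[x] = a + b * x.
Proof. by rewrite /lin hornerD hornerC hornerM hornerC hornerX. Qed.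

Lemma hornerDm k z : (Dm k).[phi z] = phi (Dc al k z).
Proof.
elim: k => [|k IH] /=; first by rewrite hornerC.
by rewrite hornerM IH horner_lin phiM phiB phiM phi1 mulNr.
Qed.

Lemma hornerNm k z : (Nm k).[phi z] = phi (Nc al lam k z).
Proof.
elim: k => [|k IH] /=; first by rewrite horner0.
rewrite hornerD !hornerM IH !horner_lin hornerC hornerDm.
by rewrite phiD !phiM phiB phiD !phiM mulNr phi1 phiR.
Qed.

Lemma coef_lin0 p a b : (p * lin a b)`_0 = p`_0 * a.
Proof. by rewrite /lin mulrDr coefD mulrA coefMX coefMC /= addr0. Qed.
Lemma coef_linS p a b i : (p * lin a b)`_i.+1 = p`_i.+1 * a + p`_i * b.
Proof. by rewrite /lin mulrDr coefD mulrA coefMX coefMC /= coefMC. Qed.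

From mathcomp Require Import ring.
Lemma phi_cprod u N : phi (cprod u N) = \prod_(i < N) phi (u i).
Proof.
elim: N => [|N IH] /=; first by rewrite big_ord0.
by rewrite phiM IH big_ord_recr.
Qed.

Lemma Dm_hi k i : (k < i)%N -> (Dm k)`_i = 0.
Proof.
elim: k i => [|k IH] [|i] //=; first by rewrite coef1.
move=> Hi; rewrite coef_linS (IH i.+1) ?(IH i) ?mul0r ?add0r //; exact: ltnW.
Qed.

Lemma Dm_top k : (Dm k)`_k = phi (cprod (fun j => Copp (al j)) k).
Proof.
elim: k => [|k IH] /=; first by rewrite coef1.
by rewrite coef_linS Dm_hi // mul0r add0r IH phiM phiN.
Qed.

Lemma coef_CM (c : R[i]) (p : {poly R[i]}) i : (c%:P * p)`_i = c * p`_i.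
Proof. by rewrite coefCM. Qed.

Lemma Nm_hi k i : (k < i)%N -> (Nm k)`_i = 0.
Proof.
elim: k i => [|k IH] [|i] //=; first by rewrite coef0.
move=> Hi; rewrite coefD -mulrA [lin _ _ * _]mulrC coef_CM !coef_linS.
rewrite (IH i.+1) ?(IH i) ?(@Dm_hi k i.+1) ?(@Dm_hi k i) //; first by ring.
all: exact: ltnW.
Qed.

Lemma Nm_top k : (Nm k)`_k =
  phi (Copp (csum (fun j => RtoC (lam j)) k) * cprod (fun j => Copp (al j)) k).
Proof.
elim: k => [|k IH] /=; first by rewrite coef0 phiM phiN phi0 oppr0 mul0r.
rewrite coefD -mulrA [lin _ _ * _]mulrC coef_CM !coef_linS Nm_hi // Dm_hi //.
rewrite IH Dm_top !phiM !phiN phiD phiR.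
set A := phi _; set B := phi _; set a := phi _.
ring.
Qed.

Lemma factor (t : R) N :
  Cmult (Cplus (RtoC t) (csum (fun j => RtoC (lam j)) N)) (cprod (fun j => Copp (al j)) N) <> RtoC 0 ->
  exists a : nat -> Coquelicot.Complex.C, forall z,
   Cminus (Cmult (RtoC t) (Dc al N z)) (Nc al lam N z) =
   Cmult (Cmult (Cplus (RtoC t) (csum (fun j => RtoC (lam j)) N)) (cprod (fun j => Copp (al j)) N))
         (cprod (fun k => Cminus z (a k)) N).
Proof.
set L := Cmult _ _ => HL.
pose Pm := (Complex t 0)%:P * Dm N - Nm N.
have Phi : forall i, (N < i)%N -> Pm`_i = 0.
  by move=> i Hi; rewrite coefB coef_CM Dm_hi // Nm_hi // mulr0 subr0.
have Ptop : Pm`_N = phi L.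
  rewrite coefB coef_CM Dm_top Nm_top /L !phiM phiD !phiN phiR.
  set A := phi _; set B := phi _; ring.
have Lnz : phi L != 0.
  apply/eqP => H; apply: HL; apply: phi_inj; by rewrite H.
have sz : size Pm = N.+1.
  apply/eqP; rewrite eqn_leq; apply/andP; split.
    by apply/leq_sizeP => j Hj; apply: Phi.
  rewrite ltnNge; apply/negP => /leq_sizeP H.
  by move: Lnz; rewrite -Ptop H ?eqxx.
have lc : lead_coef Pm = phi L by rewrite lead_coefE sz /= Ptop.
case: (closed_field_poly_normal Pm) => r Hr.
have szr : size r = N.
  move: sz; rewrite {1}Hr size_scale ?lc // size_prod_XsubC.
  by case.
exists (fun k => psi (nth 0 r k)) => z; apply: phi_inj.
have -> : phi (Cminus (Cmult (RtoC t) (Dc al N z)) (Nc al lam N z)) = Pm.[phi z].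
  by rewrite hornerD hornerN hornerM hornerC hornerDm hornerNm phiB phiM phiR.
rewrite Hr hornerZ horner_prod lc phiM phi_cprod; congr (_ * _).
rewrite (big_nth 0) big_mkord szr; apply: eq_bigr => i _.
by rewrite hornerXsubC phiB phipsi.
Qed.

End Poly.
End Bridge.

Open Scope C_scope.

Lemma Cmult_eq0 (x y : C) : x * y = 0 -> x = 0 \/ y = 0.
Proof.
  intros H. destruct (classic (x = 0)) as [Hx|Hx]; [now left|right].
  replace y with (/ x * (x * y)) by (field; auto). rewrite H. ring.
Qed.

Lemma RtoC_neq0 (r : R) : r <> 0%R -> RtoC r <> 0.
Proof. intros H E. apply H. injection E. auto. Qed.

Lemma Dc_zero al k z : Dc al k z = 0 -> exists j, (j < k)%nat /\ 1 - al j * z = 0.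
Proof.
  induction k as [|k IH]; simpl; intros H.
  - exfalso. injection H. lra.
  - destruct (Cmult_eq0 _ _ H) as [H1|H1].
    + destruct (IH H1) as [j [Hj Hj']]. exists j. split; auto.
    + exists k. split; auto.
Qed.

Lemma one_minus_eq0 (w : C) : 1 - w = 0 -> w = 1.
Proof. intros H. replace w with (1 - (1 - w)) by ring. rewrite H. ring. Qed.

Lemma Dc_nz_disc al k z :
  (forall j, (j < k)%nat -> Cmod (al j) = 1%R) -> (Cmod z < 1)%R -> Dc al k z <> 0.
Proof.
  intros Hal Hz H. destruct (Dc_zero _ _ _ H) as [j [Hj E]].
  apply one_minus_eq0 in E. 
  assert (Cmod (al j * z) = 1%R) by (rewrite E; apply Cmod_1).
  rewrite Cmod_mult, Hal in H0 by auto. lra.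
Qed.

Lemma Dc_pole_nz al k z :
  (forall i j, (i <= k)%nat -> (j <= k)%nat -> al i = al j -> i = j) ->
  1 - al k * z = 0 -> Dc al k z <> 0.
Proof.
  intros Hd H2 H1.
  destruct (Dc_zero _ _ _ H1) as [j [Hj E]].
  apply one_minus_eq0 in E. apply one_minus_eq0 in H2.
  assert (z <> 0) by (intro Z; rewrite Z, Cmult_0_r in E; injection E; lra).
  assert (al j = al k).
  { replace (al j) with (al j * z / z) by (field; auto).
    replace (al k) with (al k * z / z) by (field; auto). rewrite E, H2. auto. }
  specialize (Hd j k ltac:(lia) ltac:(lia) H0). lia.
Qed.

Lemma Nc_at_pole al lam k z :
  (forall j, (j < k)%nat -> (0 < lam j)%R) ->
  (forall i j, (i < k)%nat -> (j < k)%nat -> al i = al j -> i = j) ->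
  Dc al k z = 0 -> Nc al lam k z <> 0.
Proof.
  induction k as [|k IH]; simpl; intros Hlam Hd H.
  - exfalso. injection H. lra.
  - assert (Hd' : forall i j, (i < k)%nat -> (j < k)%nat -> al i = al j -> i = j)
      by (intros i j Hi Hj E; apply Hd; [lia|lia|exact E]).
    assert (Hd2 : forall i j, (i <= k)%nat -> (j <= k)%nat -> al i = al j -> i = j)
      by (intros i j Hi Hj E; apply Hd; [lia|lia|exact E]).
    destruct (classic (1 - al k * z = 0)) as [H2|H2].
    + intros E.
      assert (E' : RtoC (lam k) * (1 + 1) * Dc al k z = 0).
      { apply one_minus_eq0 in H2. rewrite H2 in E. rewrite <- E. ring. }
      destruct (Cmult_eq0 _ _ E') as [E1|E1].
      * destruct (Cmult_eq0 _ _ E1) as [E2|E2].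
        -- apply (RtoC_neq0 (lam k)); auto. specialize (Hlam k ltac:(lia)). lra.
        -- injection E2. lra.
      * apply (Dc_pole_nz al k z Hd2 H2 E1).
    + destruct (Cmult_eq0 _ _ H) as [H1|H1]; [|contradiction].
      intros E. rewrite H1 in E. rewrite Cmult_0_r, Cplus_0_r in E.
      destruct (Cmult_eq0 _ _ E) as [E1|E1]; [|contradiction].
      exact (IH (fun j Hj => Hlam j ltac:(lia)) Hd' H1 E1).
Qed.

Definition term (al : nat -> C) (lam : nat -> R) (z : C) (j : nat) : C :=
  RtoC (lam j) * ((1 + al j * z) / (1 - al j * z)).

Lemma Dc_factor_nz al k z : Dc al k z <> 0 -> forall j, (j < k)%nat -> 1 - al j * z <> 0.
Proof.
  induction k as [|k IH]; simpl; intros H j Hj E; [lia|].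
  assert (Dc al k z <> 0) by (intro E'; apply H; rewrite E'; ring).
  assert (1 - al k * z <> 0) by (intro E'; apply H; rewrite E'; ring).
  destruct (Nat.eq_dec j k) as [->|Hne]; [contradiction|].
  apply (IH H0 j ltac:(lia) E).
Qed.

Lemma S_eq al lam k z : Dc al k z <> 0 ->
  csum (term al lam z) k = Nc al lam k z / Dc al k z.
Proof.
  induction k as [|k IH]; simpl; intros H.
  - unfold Cdiv. rewrite Cmult_0_l. reflexivity.
  - assert (H1 : Dc al k z <> 0) by (intro E'; apply H; rewrite E'; ring).
    assert (H2 : 1 - al k * z <> 0) by (intro E'; apply H; rewrite E'; ring).
    rewrite (IH H1). unfold term. field. split; auto.
Qed.

Fixpoint rsum (lam : nat -> R) (k : nat) : R :=
  match k with O => 0%R | S k => (rsum lam k + lam k)%R end.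

Lemma csum_RtoC lam k : csum (fun j => RtoC (lam j)) k = RtoC (rsum lam k).
Proof.
  induction k as [|k IH]; simpl; auto. rewrite IH. unfold RtoC, Cplus; simpl. f_equal; ring.
Qed.

Lemma S_at0 al lam k : csum (term al lam 0) k = RtoC (rsum lam k).
Proof.
  induction k as [|k IH]; simpl; auto. rewrite IH. unfold term.
  rewrite Cmult_0_r.
  replace ((1 + 0) / (1 - 0)) with (RtoC 1) by (field; intro E; injection E; lra).
  unfold RtoC, Cplus, Cmult; simpl. f_equal; ring.
Qed.

Lemma DN_at0 al lam k : Dc al k 0 = 1 /\ Nc al lam k 0 = RtoC (rsum lam k).
Proof.
  induction k as [|k [IH1 IH2]]; simpl; auto. rewrite IH1, IH2, Cmult_0_r.
  split; [ring|]. unfold RtoC, Cplus, Cmult, Cminus, Copp; simpl. f_equal; ring.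
Qed.

Lemma Cmod_sq (w : C) : (Cmod w * Cmod w = fst w ^ 2 + snd w ^ 2)%R.
Proof. unfold Cmod. apply sqrt_sqrt. nra. Qed.

Lemma Re_frac (w : C) : 1 - w <> 0 ->
  Re ((1 + w) / (1 - w)) = ((1 - (fst w ^ 2 + snd w ^ 2)) / ((1 - fst w) ^ 2 + snd w ^ 2))%R.
Proof.
  destruct w as [a b]; simpl; intros H.
  assert (((1 - a) ^ 2 + b ^ 2)%R <> 0%R).
  { intro E. apply H. assert (a = 1%R) by nra. assert (b = 0%R) by nra. subst.
    unfold Cminus, Cplus, Copp, RtoC; simpl. f_equal; ring. }
  unfold Cdiv, Cinv, Cmult, Cplus, Cminus, Copp, Re; simpl. field.
  intro E; apply H0; nra.
Qed.

Lemma Re_term_sign al lam z j : (0 < lam j)%R -> Cmod (al j) = 1%R -> 1 - al j * z <> 0 ->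
  ((Cmod z < 1)%R -> (0 <= Re (term al lam z j))%R) /\
  ((1 <= Cmod z)%R -> (Re (term al lam z j) <= 0)%R).
Proof.
  intros Hl Ha Hn. unfold term.
  set (w := al j * z).
  assert (Hw : Cmod w = Cmod z) by (unfold w; rewrite Cmod_mult, Ha; ring).
  assert (Hre : Re (RtoC (lam j) * ((1 + w) / (1 - w))) = (lam j * Re ((1 + w) / (1 - w)))%R).
  { destruct ((1 + w) / (1 - w)). unfold Re, RtoC, Cmult; simpl. ring. }
  rewrite Hre, Re_frac by auto.
  pose proof (Cmod_sq w) as Hs. pose proof (Cmod_ge_0 z).
  assert (Hd : (0 < (1 - fst w) ^ 2 + snd w ^ 2)%R).
  { destruct (Req_dec ((1 - fst w) ^ 2 + snd w ^ 2) 0) as [E|E]; [|pose proof (pow2_ge_0 (1 - fst w)); pose proof (pow2_ge_0 (snd w)); lra].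
    exfalso. apply Hn. fold w. destruct w as [a b]; simpl in *.
    assert (a = 1%R) by nra. assert (b = 0%R) by nra. subst.
    unfold Cminus, Cplus, Copp, RtoC; simpl. f_equal; ring. }
  split; intros Hz.
  - apply Rmult_le_pos; [lra|]. apply Rdiv_le_0_compat; [|lra]. nra.
  - assert (0 <= lam j * ((fst w ^ 2 + snd w ^ 2 - 1) / ((1 - fst w) ^ 2 + snd w ^ 2)))%R.
    { apply Rmult_le_pos; [lra|]. apply Rdiv_le_0_compat; [|lra]. nra. }
    replace ((1 - (fst w ^ 2 + snd w ^ 2)) / ((1 - fst w) ^ 2 + snd w ^ 2))%R
      with (- ((fst w ^ 2 + snd w ^ 2 - 1) / ((1 - fst w) ^ 2 + snd w ^ 2)))%R by (field; lra).
    nra.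
Qed.

Lemma Re_plus (a b : C) : Re (a + b) = (Re a + Re b)%R.
Proof. reflexivity. Qed.

Lemma ReS_disc al lam k z :
  (forall j, (j < k)%nat -> (0 < lam j)%R) -> (forall j, (j < k)%nat -> Cmod (al j) = 1%R) ->
  (Cmod z < 1)%R -> (0 <= Re (csum (term al lam z) k))%R.
Proof.
  intros Hl Ha Hz. induction k as [|k IH]; cbn [csum].
  - unfold Re; simpl; lra.
  - rewrite Re_plus.
    assert (0 <= Re (term al lam z k))%R.
    { apply (Re_term_sign al lam z k (Hl k ltac:(lia)) (Ha k ltac:(lia))); auto.
      intro E. apply one_minus_eq0 in E.
      assert (Cmod (al k * z) = 1%R) by (rewrite E; apply Cmod_1).
      rewrite Cmod_mult, (Ha k ltac:(lia)) in H. lra. }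
    specialize (IH (fun j Hj => Hl j ltac:(lia)) (fun j Hj => Ha j ltac:(lia))). lra.
Qed.

Lemma ReS_out al lam k z :
  (forall j, (j < k)%nat -> (0 < lam j)%R) -> (forall j, (j < k)%nat -> Cmod (al j) = 1%R) ->
  (1 <= Cmod z)%R -> Dc al k z <> 0 -> (Re (csum (term al lam z) k) <= 0)%R.
Proof.
  intros Hl Ha Hz HD. pose proof (Dc_factor_nz al k z HD) as HF. clear HD.
  induction k as [|k IH]; cbn [csum].
  - unfold Re; simpl; lra.
  - rewrite Re_plus.
    assert (Re (term al lam z k) <= 0)%R.
    { apply (Re_term_sign al lam z k (Hl k ltac:(lia)) (Ha k ltac:(lia))); auto. }
    specialize (IH (fun j Hj => Hl j ltac:(lia)) (fun j Hj => Ha j ltac:(lia))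
                   (fun j Hj => HF j ltac:(lia))). lra.
Qed.

Lemma P_root al lam N z :
  (forall j, (j < N)%nat -> (0 < lam j)%R) -> (forall j, (j < N)%nat -> Cmod (al j) = 1%R) ->
  (forall i j, (i < N)%nat -> (j < N)%nat -> al i = al j -> i = j) ->
  (0 < rsum lam N)%R ->
  RtoC (rsum lam N) * Dc al N z - Nc al lam N z = 0 -> (Cmod z < 1)%R.
Proof.
  intros Hl Ha Hd Ht HP.
  destruct (Rlt_or_le (Cmod z) 1) as [H|H]; auto. exfalso.
  destruct (classic (Dc al N z = 0)) as [HD|HD].
  - apply (Nc_at_pole al lam N z Hl Hd HD).
    rewrite HD in HP. replace (Nc al lam N z) with (- (RtoC (rsum lam N) * 0 - Nc al lam N z)) by ring.
    rewrite HP. ring.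
  - pose proof (ReS_out al lam N z Hl Ha H HD) as HR.
    rewrite S_eq in HR by auto.
    assert (Nc al lam N z = RtoC (rsum lam N) * Dc al N z).
    { replace (Nc al lam N z) with (RtoC (rsum lam N) * Dc al N z - (RtoC (rsum lam N) * Dc al N z - Nc al lam N z)) by ring.
      rewrite HP. ring. }
    rewrite H0 in HR. replace (RtoC (rsum lam N) * Dc al N z / Dc al N z) with (RtoC (rsum lam N)) in HR by (field; auto).
    unfold Re, RtoC in HR; simpl in HR. lra.
Qed.

Definition zp (z : C) (k : nat) : C := cprod (fun _ => z) k.
Definition eps (al : nat -> C) (k : nat) : C := cprod (fun j => - Cconj (al j)) k.

Lemma conj_inv_conj (z : C) : z <> 0 -> Cconj (/ Cconj z) = / z.
Proof.
  destruct z as [a b]; intros H.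
  assert ((a ^ 2 + b ^ 2)%R <> 0%R).
  { intro E. apply H. assert (a = 0%R) by nra. assert (b = 0%R) by nra. subst. reflexivity. }
  unfold Cconj, Cinv; simpl.
  replace (a ^ 2 + (- b) ^ 2)%R with (a ^ 2 + b ^ 2)%R by ring.
  f_equal; field; auto.
all: intro E; apply H0; nra.
Qed.

Lemma conj_lin (a : R) (x y : C) : Cconj (RtoC a + x * y) = RtoC a + Cconj x * Cconj y.
Proof. destruct x as [x1 x2]; destruct y as [y1 y2]; unfold Cconj, RtoC, Cplus, Cmult; apply injective_projections; simpl; ring. Qed.
Lemma conj_lin' (a : R) (x y : C) : Cconj (RtoC a - x * y) = RtoC a - Cconj x * Cconj y.
Proof. destruct x as [x1 x2]; destruct y as [y1 y2]; unfold Cconj, RtoC, Cplus, Cminus, Copp, Cmult; apply injective_projections; simpl; ring. Qed.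
Lemma conj_R (a : R) : Cconj (RtoC a) = RtoC a.
Proof. unfold Cconj, RtoC; simpl. f_equal; ring. Qed.

Lemma conj_unit (a : C) : Cmod a = 1%R -> Cconj a * a = 1.
Proof. intros H. rewrite Cmult_comm, <- Cmod2_conj, H. unfold RtoC; f_equal; ring. Qed.

Lemma refl_step1 (ca a z : C) : ca * a = 1 -> z <> 0 -> z * (1 - ca * / z) = - ca * (1 - a * z).
Proof.
  intros H Hz. transitivity (z - ca); [field; auto|].
  replace (- ca * (1 - a * z)) with (- ca + (ca * a) * z) by ring. rewrite H. ring.
Qed.
Lemma refl_step2 (ca a z : C) : ca * a = 1 -> z <> 0 -> z * (1 + ca * / z) = ca * (1 + a * z).
Proof.
  intros H Hz. transitivity (z + ca); [field; auto|].
  replace (ca * (1 + a * z)) with (ca + (ca * a) * z) by ring. rewrite H. ring.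
Qed.

Lemma refl_D al k (z : C) : (forall j, (j < k)%nat -> Cmod (al j) = 1%R) -> z <> 0 ->
  zp z k * Cconj (Dc al k (/ Cconj z)) = eps al k * Dc al k z.
Proof.
  intros Ha Hz. induction k as [|k IH]; unfold zp, eps in *; simpl.
  - rewrite conj_R. ring.
  - rewrite Cmult_conj, conj_lin', conj_inv_conj by auto.
    pose proof (refl_step1 (Cconj (al k)) (al k) z ltac:(apply conj_unit; auto) Hz) as S1.
    specialize (IH (fun j Hj => Ha j ltac:(lia))).
    transitivity ((cprod (fun _ : nat => z) k * Cconj (Dc al k (/ Cconj z))) * (z * (1 - Cconj (al k) * / z))); [ring|].
    rewrite IH, S1. ring.
Qed.

Lemma refl_N al lam k (z : C) : (forall j, (j < k)%nat -> Cmod (al j) = 1%R) -> z <> 0 ->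
  zp z k * Cconj (Nc al lam k (/ Cconj z)) = - eps al k * Nc al lam k z.
Proof.
  intros Ha Hz. induction k as [|k IH]; simpl.
  - unfold zp, eps; simpl. rewrite conj_R. ring.
  - assert (HD := refl_D al k z (fun j Hj => Ha j ltac:(lia)) Hz).
    specialize (IH (fun j Hj => Ha j ltac:(lia))).
    unfold zp, eps in *; simpl.
    rewrite Cplus_conj, !Cmult_conj, conj_lin', conj_lin, conj_inv_conj, conj_R by auto.
    pose proof (refl_step1 (Cconj (al k)) (al k) z ltac:(apply conj_unit; auto) Hz) as S1.
    pose proof (refl_step2 (Cconj (al k)) (al k) z ltac:(apply conj_unit; auto) Hz) as S2.
    transitivity ((cprod (fun _ : nat => z) k * Cconj (Nc al lam k (/ Cconj z))) * (z * (1 - Cconj (al k) * / z))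
      + RtoC (lam k) * (z * (1 + Cconj (al k) * / z)) * (cprod (fun _ : nat => z) k * Cconj (Dc al k (/ Cconj z)))); [ring|].
    rewrite IH, HD, S1, S2. ring.
Qed.

Lemma cprod_nz (u : nat -> C) N : (forall j, (j < N)%nat -> u j <> 0) -> cprod u N <> 0.
Proof.
  induction N as [|N IH]; simpl; intros H E.
  - injection E; lra.
  - destruct (Cmult_eq0 _ _ E) as [E1|E1].
    + apply (IH (fun j Hj => H j ltac:(lia)) E1).
    + apply (H N ltac:(lia) E1).
Qed.

Lemma cprod_zero (u : nat -> C) N k : (k < N)%nat -> u k = 0 -> cprod u N = 0.
Proof.
  induction N as [|N IH]; simpl; intros Hk H; [lia|].
  destruct (Nat.eq_dec k N) as [->|Hne].
  - rewrite H. ring.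
  - rewrite IH by (auto; lia). ring.
Qed.

Lemma cprod_zero_inv (u : nat -> C) N : cprod u N = 0 -> exists k, (k < N)%nat /\ u k = 0.
Proof.
  intros H. destruct (classic (exists k, (k < N)%nat /\ u k = 0)) as [E|E]; auto.
  exfalso. apply (cprod_nz u N); auto. intros j Hj E'. apply E. exists j. auto.
Qed.

Lemma cprod_ext (u v : nat -> C) N : (forall j, (j < N)%nat -> u j = v j) -> cprod u N = cprod v N.
Proof.
  induction N as [|N IH]; simpl; intros H; auto.
  rewrite IH by (intros; apply H; lia). rewrite H by lia. auto.
Qed.

Lemma cprod_mult (u v : nat -> C) N : cprod (fun j => u j * v j) N = cprod u N * cprod v N.
Proof. induction N as [|N IH]; simpl. ring. rewrite IH. ring. Qed.

Lemma cprod_conj (u : nat -> C) N : Cconj (cprod u N) = cprod (fun j => Cconj (u j)) N.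
Proof. induction N as [|N IH]; simpl. apply conj_R. rewrite Cmult_conj, IH. auto. Qed.

Lemma cprod_div (u v : nat -> C) N : (forall j, (j < N)%nat -> v j <> 0) ->
  cprod u N / cprod v N = cprod (fun j => u j / v j) N.
Proof.
  induction N as [|N IH]; simpl; intros H.
  - field; try (intro E; injection E; lra).
  - rewrite <- IH by (intros; apply H; lia).
    field. split. apply H; lia. apply cprod_nz. intros; apply H; lia.
Qed.

Lemma Cmod_cprod_unit (u : nat -> C) N : (forall j, (j < N)%nat -> Cmod (u j) = 1%R) ->
  Cmod (cprod u N) = 1%R.
Proof.
  induction N as [|N IH]; simpl; intros H.
  - apply Cmod_1.
  - rewrite Cmod_mult, IH, H by (auto; intros; apply H; lia). ring.
Qed.

Lemma conj_sub (x y : C) : Cconj (x - y) = Cconj x - Cconj y.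
Proof. destruct x, y; unfold Cconj, Cminus, Cplus, Copp; apply injective_projections; simpl; ring. Qed.

Lemma Cmod_opp_conj (a : C) : Cmod (- Cconj a) = Cmod a.
Proof. rewrite Cmod_opp, Cmod_conj. auto. Qed.


Definition ccont (F : R -> C) (s : R) :=
  continuity_pt (fun s => fst (F s)) s /\ continuity_pt (fun s => snd (F s)) s.

Lemma Cmod_RtoC_mult (s : R) (z : C) : Cmod (RtoC s * z) = (Rabs s * Cmod z)%R.
Proof. rewrite Cmod_mult, Cmod_R. auto. Qed.

Lemma ccont_h (h : C -> C) (z : C) (s0 : R) :
  ex_derive h (RtoC s0 * z) -> ccont (fun s => h ((RtoC s * z)%C)) s0.
Proof.
  intros H. apply ex_derive_continuous in H.
  unfold continuous, filterlim, filter_le, filtermap in H.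
  assert (key : forall eps : posreal, exists del : posreal, forall s, (Rabs (s - s0) < del)%R ->
     (Rabs (fst (h ((RtoC s * z)%C)) - fst (h ((RtoC s0 * z)%C))) < eps)%R /\
     (Rabs (snd (h ((RtoC s * z)%C)) - snd (h ((RtoC s0 * z)%C))) < eps)%R).
  { intros eps.
    destruct (H (fun y => ball (h ((RtoC s0 * z)%C)) eps y)) as [del Hdel].
    { exists eps. auto. }
    assert (Hp : (0 < del / (Cmod z + 1))%R).
    { apply Rdiv_lt_0_compat. apply cond_pos. pose proof (Cmod_ge_0 z). lra. }
    exists (mkposreal _ Hp). intros s Hs. simpl in Hs.
    apply (Hdel (RtoC s * z)).
    change (Cmod (RtoC s * z - RtoC s0 * z) < del)%R.
    replace (RtoC s * z - RtoC s0 * z) with (RtoC (s - s0) * z).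
    2:{ unfold RtoC, Cminus, Cplus, Copp, Cmult. apply injective_projections; simpl; ring. }
    rewrite Cmod_RtoC_mult. pose proof (Cmod_ge_0 z). pose proof (Rabs_pos (s - s0)).
    pose proof (cond_pos del).
    apply Rmult_lt_compat_r with (r := (Cmod z + 1)%R) in Hs; [|lra].
    unfold Rdiv in Hs. rewrite Rmult_assoc, Rinv_l in Hs by lra. nra. }
  split; apply continuity_pt_filterlim; intros P [eps HP];
    destruct (key eps) as [del Hdel]; exists del; intros s Hs; apply HP;
    apply (Hdel s Hs).
Qed.

Lemma ccont_const (c : C) s : ccont (fun _ => c) s.
Proof. split; apply continuity_pt_const; intros x y; auto. Qed.

Lemma ccont_RtoC s : ccont (fun s => RtoC s) s.
Proof. split; simpl. apply continuity_pt_id. apply continuity_pt_const; intros x y; auto. Qed.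

Lemma ccont_plus F G s : ccont F s -> ccont G s -> ccont (fun s => F s + G s) s.
Proof.
  intros [F1 F2] [G1 G2]. split.
  - change (continuity_pt (fun s => (fst (F s) + fst (G s))%R) s). apply continuity_pt_plus; auto.
  - change (continuity_pt (fun s => (snd (F s) + snd (G s))%R) s). apply continuity_pt_plus; auto.
Qed.

Lemma ccont_opp F s : ccont F s -> ccont (fun s => - F s) s.
Proof.
  intros [F1 F2]. split.
  - change (continuity_pt (fun s => (- fst (F s))%R) s). apply continuity_pt_opp; auto.
  - change (continuity_pt (fun s => (- snd (F s))%R) s). apply continuity_pt_opp; auto.
Qed.

Lemma ccont_minus F G s : ccont F s -> ccont G s -> ccont (fun s => F s - G s) s.
Proof. intros. apply ccont_plus; auto. apply ccont_opp; auto. Qed.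

Lemma ccont_mult F G s : ccont F s -> ccont G s -> ccont (fun s => F s * G s) s.
Proof.
  intros [F1 F2] [G1 G2]. split.
  - change (continuity_pt (fun s => (fst (F s) * fst (G s) - snd (F s) * snd (G s))%R) s).
    apply continuity_pt_minus; apply continuity_pt_mult; auto.
  - change (continuity_pt (fun s => (fst (F s) * snd (G s) + snd (F s) * fst (G s))%R) s).
    apply continuity_pt_plus; apply continuity_pt_mult; auto.
Qed.

Lemma ccont_inv F s : ccont F s -> F s <> 0 -> ccont (fun s => / F s) s.
Proof.
  intros [F1 F2] Hn.
  assert (HD : (fst (F s) * (fst (F s) * 1) + snd (F s) * (snd (F s) * 1))%R <> 0%R).
  { intro E. apply Hn. destruct (F s) as [a b]. simpl in E.
    assert (a = 0%R) by nra. assert (b = 0%R) by nra. subst. reflexivity. }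
  assert (Hc : continuity_pt (fun s => (fst (F s) * (fst (F s) * 1) + snd (F s) * (snd (F s) * 1))%R) s).
  { apply continuity_pt_plus; apply continuity_pt_mult; auto; apply continuity_pt_mult; auto;
    apply continuity_pt_const; intros x y; auto. }
  split.
  - change (continuity_pt (fun s => (fst (F s) / (fst (F s) * (fst (F s) * 1) + snd (F s) * (snd (F s) * 1)))%R) s).
    apply continuity_pt_div; auto.
  - change (continuity_pt (fun s => (- snd (F s) / (fst (F s) * (fst (F s) * 1) + snd (F s) * (snd (F s) * 1)))%R) s).
    apply continuity_pt_div; auto. apply continuity_pt_opp; auto.
Qed.

Lemma ccont_div F G s : ccont F s -> ccont G s -> G s <> 0 -> ccont (fun s => F s / G s) s.
Proof. intros. apply ccont_mult; auto. apply ccont_inv; auto. Qed.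

Lemma ccont_csum (u : nat -> R -> C) k s :
  (forall j, (j < k)%nat -> ccont (u j) s) -> ccont (fun s => csum (fun j => u j s) k) s.
Proof.
  induction k as [|k IH]; intros H; simpl.
  - apply ccont_const.
  - apply ccont_plus. apply IH; intros; apply H; lia. apply H; lia.
Qed.

Lemma Cexp_add (a b : C) : Cexp (a + b) = Cexp a * Cexp b.
Proof.
  destruct a as [a1 a2], b as [b1 b2]. unfold Cexp, Cplus, Cmult; simpl.
  rewrite exp_plus, cos_plus, sin_plus. apply injective_projections; simpl; ring.
Qed.

Lemma Cexp_0 : Cexp 0 = 1.
Proof. unfold Cexp; simpl. rewrite exp_0, cos_0, sin_0. unfold RtoC. apply injective_projections; simpl; ring. Qed.

Lemma Cexp_one (w : C) : Cexp w = 1 -> Re w = 0%R /\ cos (Im w) = 1%R.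
Proof.
  destruct w as [a b]. unfold Cexp, Re, Im; simpl. intros E. injection E as E1 E2.
  pose proof (exp_pos a). pose proof (sin2_cos2 b). unfold Rsqr in *.
  assert (sin b = 0%R) by nra.
  assert (cos b = 1%R) by nra.
  split; auto. rewrite H2, Rmult_1_r in E1. rewrite <- (ln_exp a), E1. apply ln_1.
Qed.

Lemma zero_of_cos_pos (phi : R -> R) :
  (forall s, (0 <= s <= 1)%R -> continuity_pt phi s) -> phi 0%R = 0%R ->
  (forall s, (0 <= s <= 1)%R -> cos (phi s) = 1%R) -> ~ (0 < phi 1%R)%R.
Proof.
  intros Hc H0 Hcos Hp.
  destruct (Rle_or_lt (phi 1%R) PI) as [Hle|Hlt].
  - assert (cos (phi 1%R) < cos 0)%R.
    { pose proof PI_RGT_0. apply cos_decreasing_1; lra. }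
    rewrite cos_0, Hcos in H by lra. lra.
  - destruct (Ranalysis5.IVT_interv (fun s => (phi s - PI)%R) 0 1) as [s [Hs Es]].
    + intros a Ha. apply continuity_pt_minus. apply Hc; auto. apply continuity_pt_const; intros x y; auto.
    + lra.
    + rewrite H0. pose proof PI_RGT_0. lra.
    + lra.
    + assert (phi s = PI) by lra. pose proof (Hcos s Hs). rewrite H, cos_PI in H1. lra.
Qed.

Lemma zero_of_cos (phi : R -> R) :
  (forall s, (0 <= s <= 1)%R -> continuity_pt phi s) -> phi 0%R = 0%R ->
  (forall s, (0 <= s <= 1)%R -> cos (phi s) = 1%R) -> phi 1%R = 0%R.
Proof.
  intros Hc H0 Hcos.
  destruct (Rtotal_order (phi 1%R) 0) as [Hn|[He|Hp]]; auto; exfalso.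
  - apply (zero_of_cos_pos (fun s => - phi s)%R).
    + intros s Hs. apply continuity_pt_opp. auto.
    + rewrite H0. ring.
    + intros s Hs. rewrite cos_neg. auto.
    + lra.
  - apply (zero_of_cos_pos phi); auto.
Qed.

Lemma h_formula (N : nat) (lam : nat -> R) (al : nat -> C) (f h : C -> C) (t : R) :
  (forall j, (j < N)%nat -> (0 < lam j)%R) -> (forall j, (j < N)%nat -> Cmod (al j) = 1%R) ->
  (forall z, in_disc z -> f z = Cexp (- csum (term al lam z) N)) ->
  t = rsum lam N -> (0 < t)%R ->
  holo_on_disc h -> (forall z, in_disc z -> in_disc (h z)) -> h 0 = 0 ->
  (forall z, in_disc z -> f z = Cexp (RtoC t * ((h z - 1) / (h z + 1)))) ->
  forall z, in_disc z -> h z = (RtoC t - csum (term al lam z) N) / (RtoC t + csum (term al lam z) N).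
Proof.
  intros Hl Ha Hf Ht' Htp Hhol Hmap Hh0 Hfh z Hz.
  set (G := fun x => RtoC t * ((h x - 1) / (h x + 1)) + csum (term al lam x) N).
  assert (HG1 : forall x, in_disc x -> Cexp (G x) = 1).
  { intros x Hx. unfold G. rewrite Cexp_add, <- Hfh by auto. rewrite Hf by auto.
    rewrite <- Cexp_add.
    replace (- csum (term al lam x) N + csum (term al lam x) N) with (RtoC 0) by ring.
    apply Cexp_0. }
  assert (Hsd : forall s, (0 <= s <= 1)%R -> in_disc (RtoC s * z)).
  { intros s Hs. unfold in_disc in *. rewrite Cmod_RtoC_mult, Rabs_pos_eq by lra.
    pose proof (Cmod_ge_0 z). nra. }
  assert (Hh1 : forall x, in_disc x -> h x + 1 <> 0).
  { intros x Hx E. assert (h x = - (1)) by (replace (h x) with (h x + 1 - 1) by ring; rewrite E; ring).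
    pose proof (Hmap x Hx). unfold in_disc in H0. rewrite H, Cmod_opp, Cmod_1 in H0. lra. }
  assert (Hterm1 : forall x j, in_disc x -> (j < N)%nat -> 1 - al j * x <> 0).
  { intros x j Hx Hj E. apply one_minus_eq0 in E.
    assert (Cmod (al j * x) = 1%R) by (rewrite E; apply Cmod_1).
    rewrite Cmod_mult, (Ha j Hj) in H. unfold in_disc in Hx. lra. }
  set (phi := fun s => Im (G (RtoC s * z))).
  assert (Hphi1 : phi 1%R = 0%R).
  { apply zero_of_cos.
    - intros s Hs. unfold phi, G.
      assert (Hh := ccont_h h z s (Hhol _ (Hsd s Hs))).
      assert (ccont (fun s => RtoC t * ((h (RtoC s * z) - 1) / (h (RtoC s * z) + 1))
                              + csum (fun j => term al lam (RtoC s * z) j) N) s).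
      { apply ccont_plus.
        - apply ccont_mult. apply ccont_const.
          apply ccont_div. apply ccont_minus; auto; apply ccont_const.
          apply ccont_plus; auto; apply ccont_const.
          apply Hh1. auto.
        - apply ccont_csum. intros j Hj. unfold term.
          apply ccont_mult. apply ccont_const.
          apply ccont_div.
          + apply ccont_plus. apply ccont_const. apply ccont_mult. apply ccont_const.
            apply ccont_mult. apply ccont_RtoC. apply ccont_const.
          + apply ccont_minus. apply ccont_const. apply ccont_mult. apply ccont_const.
            apply ccont_mult. apply ccont_RtoC. apply ccont_const.
          + apply Hterm1; auto. }
      exact (proj2 H).
    - unfold phi, G. rewrite Cmult_0_l, Hh0, S_at0, <- Ht'.
      replace ((0 - 1) / (0 + 1)) with (RtoC (-1)) by (field; intro E; injection E; lra).
      unfold Im, RtoC, Cmult, Cplus; simpl. ring.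
    - intros s Hs. unfold phi. apply (Cexp_one _ (HG1 _ (Hsd s Hs))). }
  unfold phi in Hphi1. rewrite Cmult_1_l in Hphi1.
  assert (Hre := proj1 (Cexp_one _ (HG1 z Hz))).
  assert (HG0 : G z = 0).
  { apply injective_projections; simpl; auto. }
  unfold G in HG0.
  set (u := h z) in *. set (S := csum (term al lam z) N) in *.
  assert (Hu1 : u + 1 <> 0) by (apply Hh1; auto).
  assert (HtS : RtoC t + S <> 0).
  { intro E0. assert (Re (RtoC t + S) = 0%R) by (rewrite E0; auto).
    pose proof (ReS_disc al lam N z Hl Ha Hz). fold S in H0.
    rewrite Re_plus in H. unfold Re at 1, RtoC in H. simpl in H. lra. }
  assert (E0 : RtoC t * (u - 1) + S * (u + 1) = 0).
  { replace (RtoC t * (u - 1) + S * (u + 1)) with ((RtoC t * ((u - 1) / (u + 1)) + S) * (u + 1))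
      by (field; auto).
    rewrite HG0. ring. }
  assert (E : u * (RtoC t + S) = RtoC t - S).
  { replace (u * (RtoC t + S)) with ((RtoC t - S) + (RtoC t * (u - 1) + S * (u + 1))) by ring.
    rewrite E0. ring. }
  rewrite <- E. field. auto.
Qed.

Lemma t_value (N : nat) (lam : nat -> R) (al : nat -> C) (f : C -> C) (t : R) :
  (forall z, in_disc z -> f z = Cexp (- csum (term al lam z) N)) ->
  t = (- ln (Re (f 0)))%R -> t = rsum lam N.
Proof.
  intros Hf Ht. rewrite Hf in Ht by (unfold in_disc; rewrite Cmod_0; lra).
  rewrite S_at0 in Ht. unfold Cexp, Re, RtoC, Copp in Ht; simpl in Ht.
  rewrite Ropp_0, cos_0, Rmult_1_r, ln_exp in Ht. lra.
Qed.

Theorem lemma5 (n N : nat) (f h : Complex.C -> Complex.C) (t : R) :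
  extremal n f ->
  Im (f 0) = 0%R -> (0 < Re (f 0))%R ->
  has_atoms f N ->
  t = (- ln (Re (f 0)))%R -> (0 < t)%R ->
  holo_on_disc h -> (forall z, in_disc z -> in_disc (h z)) -> h 0 = 0 ->
  (forall z, in_disc z -> f z = Cexp (RtoC t * ((h z - 1) / (h z + 1)))) ->
  blaschke_deg h N.
Proof.
  intros _ Him Hre [lam [al [Hl [Ha [Hd Hf]]]]] Ht Htp Hhol Hmap Hh0 Hfh.
  change (forall z, in_disc z -> f z = Cexp (- csum (term al lam z) N)) in Hf.
  pose proof (t_value N lam al f t Hf Ht) as Ht'.
  pose proof (h_formula N lam al f h t Hl Ha Hf Ht' Htp Hhol Hmap Hh0 Hfh) as HB.
  set (LN := (RtoC t + csum (fun j => RtoC (lam j)) N) * cprod (fun j => - al j) N).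
  assert (HLN : LN <> 0).
  { unfold LN. rewrite csum_RtoC, <- Ht'. intro E. destruct (Cmult_eq0 _ _ E) as [E1|E1].
    - injection E1. lra.
    - apply (cprod_nz (fun j => - al j) N); auto. intros j Hj E2.
      assert (Cmod (- al j) = 0%R) by (rewrite E2; apply Cmod_0).
      rewrite Cmod_opp, Ha in H by auto. lra. }
  destruct (Bridge.factor al lam t N HLN) as [a Ha'].
  fold LN in Ha'.
  assert (HP : forall z, RtoC t * Dc al N z - Nc al lam N z = LN * cprod (fun k => z - a k) N)
    by exact Ha'. clear Ha'.
  assert (Hak : forall k, (k < N)%nat -> (Cmod (a k) < 1)%R).
  { intros k Hk. apply (P_root al lam N (a k) Hl Ha Hd); [lra|].
    rewrite <- Ht', HP. rewrite (cprod_zero _ N k Hk); [ring|]. ring. }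
  set (E := eps al N).
  assert (HE : Cmod E = 1%R).
  { unfold E, eps. apply Cmod_cprod_unit. intros j Hj. rewrite Cmod_opp_conj. auto. }
  assert (HEnz : E <> 0) by (intro E0; rewrite E0, Cmod_0 in HE; lra).
  assert (HcLN : Cconj LN <> 0).
  { intro E0. apply HLN. rewrite <- (Cconj_conj LN), E0. apply conj_R. }
  exists (LN * E / Cconj LN), a. split; [|split; auto].
  { unfold Cdiv. rewrite !Cmod_mult, Cmod_inv, Cmod_conj, HE by auto.
    field. intro E0. apply HLN. apply Cmod_eq_0. auto. }
  intros z Hz.
  destruct (classic (z = 0)) as [Z|Z].
  - subst z. rewrite Hh0. destruct (DN_at0 al lam N) as [D0 N0].
    assert (H0 := HP 0). rewrite D0, N0, <- Ht' in H0.
    assert (Hc0 : cprod (fun k => 0 - a k) N = 0).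
    { symmetry in H0. replace (RtoC t * 1 - RtoC t) with (RtoC 0) in H0 by ring.
      destruct (Cmult_eq0 _ _ H0) as [E1|E1]; [contradiction|auto]. }
    destruct (cprod_zero_inv _ _ Hc0) as [k [Hk Ek]].
    rewrite (cprod_zero _ N k Hk); [ring|]. rewrite Ek. unfold Cdiv. ring.
  - assert (Hz1 : (Cmod z < 1)%R) by exact Hz.
    assert (HD : Dc al N z <> 0) by (apply Dc_nz_disc; auto).
    assert (HS := S_eq al lam N z HD).
    assert (Hpos := ReS_disc al lam N z Hl Ha Hz1).
    assert (HtS : RtoC t + csum (term al lam z) N <> 0).
    { intro E0. assert (Re (RtoC t + csum (term al lam z) N) = 0%R) by (rewrite E0; auto).
      rewrite Re_plus in H. unfold Re at 1, RtoC in H. simpl in H. lra. }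
    rewrite HS in HtS.
    assert (HQ : RtoC t * Dc al N z + Nc al lam N z <> 0).
    { intro E0. apply HtS. replace (Nc al lam N z) with (RtoC t * Dc al N z + Nc al lam N z - RtoC t * Dc al N z) by ring.
      rewrite E0. field. auto. }
    rewrite (HB z Hz), HS.
    replace ((RtoC t - Nc al lam N z / Dc al N z) / (RtoC t + Nc al lam N z / Dc al N z))
      with ((RtoC t * Dc al N z - Nc al lam N z) / (RtoC t * Dc al N z + Nc al lam N z))
      by (field; auto).
    set (w := / Cconj z).
    assert (R1 : zp z N * Cconj (RtoC t * Dc al N w - Nc al lam N w)
                 = E * (RtoC t * Dc al N z + Nc al lam N z)).
    { rewrite conj_sub, Cmult_conj, conj_R.
      transitivity (RtoC t * (zp z N * Cconj (Dc al N w)) - zp z N * Cconj (Nc al lam N w)); [ring|].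
      unfold w. rewrite refl_D, refl_N by auto. unfold E. ring. }
    assert (Hden : forall k, (k < N)%nat -> 1 - Cconj (a k) * z <> 0).
    { intros k Hk E0. apply one_minus_eq0 in E0.
      assert (Cmod (Cconj (a k) * z) = 1%R) by (rewrite E0; apply Cmod_1).
      rewrite Cmod_mult, Cmod_conj in H. pose proof (Hak k Hk). pose proof (Cmod_ge_0 (a k)).
      pose proof (Cmod_ge_0 z). nra. }
    assert (R2 : zp z N * Cconj (LN * cprod (fun k => w - a k) N)
                 = Cconj LN * cprod (fun k => 1 - Cconj (a k) * z) N).
    { rewrite Cmult_conj, cprod_conj.
      transitivity (Cconj LN * (zp z N * cprod (fun j => Cconj (w - a j)) N)); [ring|].
      unfold zp. rewrite <- cprod_mult. f_equal. apply cprod_ext. intros j Hj.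
      rewrite conj_sub. unfold w. rewrite conj_inv_conj by auto. field. auto. }
    rewrite <- HP, R1 in R2.
    assert (HQ' : RtoC t * Dc al N z + Nc al lam N z = Cconj LN * cprod (fun k => 1 - Cconj (a k) * z) N / E).
    { rewrite <- R2. field. auto. }
    rewrite HQ', HP, <- cprod_div by auto.
    field. split; [auto|split; auto]. apply cprod_nz. auto.
Qed.
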